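(* Let $0<\alpha_1\le\dots\le\alpha_n\le1$, $\alpha_0:=0$. For all $p,q\in\mathcal{S}_2^n$, the fractional join of $p,q$ with respect to the valuation $v_{\boldsymbol\alpha}$ equals the formal combination $$\sum_{i=0}^{n-1}\Big(\frac1{1+\alpha_i}-\frac1{1+\alpha_{i+1}}\Big)\big((p\vee_L^iq)+(p\vee_R^iq)\big)+\frac{1-\alpha_n}{1+\alpha_n}(p\sqcup^nq)$$ (coefficients of equal elements added).
   Context: $\mathcal{S}_2=\{-,0,+\}$ with minimum $0$ and incomparable $-,+$; $\mathcal{S}_2^n$ has the componentwise order. Operations on $\mathcal{S}_2$: $x\sqcup y$ is the larger of $x,y$ if comparable and $0$ if $\{x,y\}=\{-,+\}$; $x\sqcup_+y=+$ if $\{x,y\}=\{-,+\}$, else $x\sqcup y$; $x\vee_Ly=x$ if $x\ne0$ and $y$ if $x=0$; $x\vee_Ry=y$ if $y\ne0$ and $x$ if $y=0$. For $i=0,\dots,n$: $\sqcup^i,\vee_L^i,\vee_R^i$ apply $\sqcup_+$ in the first $i$ coordinates and respectively $\sqcup,\vee_L,\vee_R$ in the remaining coordinates. Valuation: $v_i(0)=0,v_i(+)=1,v_i(-)=\alpha_i$, $v_{\boldsymbol\alpha}(x)=\sum_iv_i(x_i)$. Fractional join w.r.t. $v=v_{\boldsymbol\alpha}$: $I(p,q)$ is the set of elements on shortest $p$–$q$ paths of the covering graph; $v(u;p,q)=(v(u\wedge p)-v(p\wedge q),v(u\wedge q)-v(p\wedge q))$ ($\wedge$ = meet); $\mathcal{E}(p,q)$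 the $u\in I(p,q)$ with $v(u;p,q)$ a componentwise-maximal extreme point of the convex hull $\mathrm{Conv}I(p,q)$; $C(u;p,q)=\{w\in\mathbf{R}^2_{\ge0}:\langle w,v(u;p,q)\rangle=\max_{z\in\mathrm{Conv}I(p,q)}\langle w,z\rangle\}=\{(x,y)\ge0:y\cos\alpha\le x\sin\alpha,\ y\cos\beta\ge x\sin\beta\}$ ($0\le\beta\le\alpha\le\pi/2$), $[C]=\frac{\sin\alpha}{\sin\alpha+\cos\alpha}-\frac{\sin\beta}{\sin\beta+\cos\beta}$; the fractional join is $\sum_{u\in\mathcal{E}(p,q)}[C(u;p,q)]u$. *)

(* Defs.v *)
From HB Require Import structures.
From mathcomp Require Import all_boot all_order all_algebra.
From mathcomp Require Import boolp classical_sets reals trigo.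
Set Implicit Arguments. Unset Strict Implicit. Unset Printing Implicit Defensive.
Import Order.TTheory GRing.Theory Num.Theory.
Local Open Scope ring_scope.

Inductive S2 := Mi | Ze | Pl.

Definition S2_to_o (x : S2) : 'I_3 :=
  match x with Mi => inord 0 | Ze => inord 1 | Pl => inord 2 end.
Definition o_to_S2 (i : 'I_3) : S2 :=
  match val i with 0 => Mi | 1 => Ze | _ => Pl end.
Lemma S2_toK : cancel S2_to_o o_to_S2.
Proof. by case; rewrite /o_to_S2 /= inordK. Qed.
HB.instance Definition _ := Finite.copy S2 (can_type S2_toK).

Definition le1 (a b : S2) : bool := (a == Ze) || (a == b).

Definition S2n (n : nat) := {ffun 'I_n -> S2}.

Definition leS (n : nat) (x y : S2n n) : bool := [forall i, le1 (x i) (y i)].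
Definition ltS (n : nat) (x y : S2n n) : bool := (x != y) && leS x y.

Definition covers (n : nat) (x y : S2n n) : bool :=
  ltS x y && [forall z : S2n n, ~~ (ltS x z && ltS z y)].
Definition adj (n : nat) (x y : S2n n) : bool := covers x y || covers y x.

(* s is (the tail of) a walk from p to q in the covering graph, of length size s *)
Definition walk (n : nat) (p q : S2n n) (s : seq (S2n n)) : bool :=
  path (@adj n) p s && (last p s == q).

Definition Iset (n : nat) (p q : S2n n) (u : S2n n) : Prop :=
  exists s, [/\ walk p q s, u \in p :: s &
    forall s', walk p q s' -> (size s <= size s')%N].

Definition meet1 (a b : S2) : S2 := if a == b then a else Ze.
Definition meetS (n : nat) (x y : S2n n) : S2n n := [ffun i => meet1 (x i) (y i)].

Definition sqcup1 (a b : S2) : S2 :=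
  if le1 a b then b else if le1 b a then a else Ze.
Definition sqcupP1 (a b : S2) : S2 :=
  if ((a == Mi) && (b == Pl)) || ((a == Pl) && (b == Mi)) then Pl else sqcup1 a b.
Definition veeL1 (a b : S2) : S2 := if a != Ze then a else b.
Definition veeR1 (a b : S2) : S2 := if b != Ze then b else a.

Definition sqcupI (n i : nat) (p q : S2n n) : S2n n :=
  [ffun j : 'I_n => if (j < i)%N then sqcupP1 (p j) (q j) else sqcup1 (p j) (q j)].
Definition veeLI (n i : nat) (p q : S2n n) : S2n n :=
  [ffun j : 'I_n => if (j < i)%N then sqcupP1 (p j) (q j) else veeL1 (p j) (q j)].
Definition veeRI (n i : nat) (p q : S2n n) : S2n n :=
  [ffun j : 'I_n => if (j < i)%N then sqcupP1 (p j) (q j) else veeR1 (p j) (q j)].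

Section Real.
Variable R : realType.

Definition alph (alpha : nat -> R) (k : nat) : R := if k == 0%N then 0 else alpha k.

(* valuation: coordinate j : 'I_n (the (j+1)-th coordinate) uses alpha_(j+1) *)
Definition val1 (alpha : nat -> R) (j : nat) (a : S2) : R :=
  match a with Ze => 0 | Pl => 1 | Mi => alpha j.+1 end.
Definition valu (n : nat) (alpha : nat -> R) (x : S2n n) : R :=
  \sum_(j < n) val1 alpha j (x j).

Definition vpt (n : nat) (alpha : nat -> R) (p q u : S2n n) : R * R :=
  (valu alpha (meetS u p) - valu alpha (meetS p q),
   valu alpha (meetS u q) - valu alpha (meetS p q)).

Definition convI (n : nat) (alpha : nat -> R) (p q : S2n n) (z : R * R) : Prop :=
  exists lam : S2n n -> R,
    [/\ forall u, 0 <= lam u,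
        forall u, ~ Iset p q u -> lam u = 0,
        \sum_u lam u = 1 &
        z = (\sum_u lam u * (vpt alpha p q u).1, \sum_u lam u * (vpt alpha p q u).2)].

Definition extreme_pt (K : R * R -> Prop) (z : R * R) : Prop :=
  K z /\ forall x y (t : R), K x -> K y -> 0 < t < 1 ->
    z = (t * x.1 + (1 - t) * y.1, t * x.2 + (1 - t) * y.2) -> x = y.

Definition cw_maximal (K : R * R -> Prop) (z : R * R) : Prop :=
  K z /\ forall z', K z' -> z.1 <= z'.1 -> z.2 <= z'.2 -> z' = z.

Definition Eset (n : nat) (alpha : nat -> R) (p q u : S2n n) : Prop :=
  Iset p q u /\ extreme_pt (convI alpha p q) (vpt alpha p q u)
             /\ cw_maximal (convI alpha p q) (vpt alpha p q u).

Definition dotp (w z : R * R) : R := w.1 * z.1 + w.2 * z.2.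

Definition Ccone (n : nat) (alpha : nat -> R) (p q u : S2n n) (w : R * R) : Prop :=
  [/\ 0 <= w.1, 0 <= w.2, convI alpha p q (vpt alpha p q u) &
      forall z, convI alpha p q z -> dotp w z <= dotp w (vpt alpha p q u)].

Definition angle_cone (a b : R) (w : R * R) : Prop :=
  [/\ 0 <= w.1, 0 <= w.2, w.2 * cos a <= w.1 * sin a & w.2 * cos b >= w.1 * sin b].

Definition cone_meas (C : R * R -> Prop) : R :=
  xget 0 [set m | exists a b : R, [/\ 0 <= b, b <= a, a <= pi / 2,
     C = angle_cone a b &
     m = sin a / (sin a + cos a) - sin b / (sin b + cos b)]].

(* the fractional join, as a formal combination (coefficient function) *)
Definition frac_join (n : nat) (alpha : nat -> R) (p q : S2n n) : S2n n -> R :=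
  fun x => if `[< Eset alpha p q x >] then cone_meas (Ccone alpha p q x) else 0.

Definition rhs_comb (n : nat) (alpha : nat -> R) (p q : S2n n) : S2n n -> R :=
  fun x =>
    \sum_(i < n) ((1 + alph alpha i)^-1 - (1 + alph alpha i.+1)^-1) *
        ((veeLI i p q == x)%:R + (veeRI i p q == x)%:R)
    + (1 - alph alpha n) / (1 + alph alpha n) * (sqcupI n p q == x)%:R.

End Real.

(* Main.v *)
Require Import Defs.
From HB Require Import structures.
From mathcomp Require Import all_boot all_order all_algebra.
From mathcomp Require Import boolp classical_sets reals trigo.
Import Order.TTheory GRing.Theory Num.Theory.
Set Implicit Arguments. Unset Strict Implicit. Unset Printing Implicit Defensive.
From mathcomp Require Import zify.

Lemma S2_eqE (a b : S2) : (a == b) =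
  match a, b with Mi, Mi | Ze, Ze | Pl, Pl => true | _, _ => false end.
Proof.
case: a; case: b => //=; try exact: eqxx; apply/eqP => H;
have := congr1 (fun x => val (S2_to_o x)) H; rewrite /= !inordK //.
Qed.

Definition d1 (a b : S2) : nat := match a, b with
 | Mi, Mi | Ze, Ze | Pl, Pl => 0 | Mi, Pl | Pl, Mi => 2 | _, _ => 1 end.
Definition DD (n : nat) (x y : S2n n) : nat := \sum_(j < n) d1 (x j) (y j).

Lemma d1_tri a b c : (d1 a c <= d1 a b + d1 b c)%N.
Proof. by case: a; case: b; case: c. Qed.
Lemma d1_sym a b : d1 a b = d1 b a.
Proof. by case: a; case: b. Qed.
Lemma d1_eq0 a b : d1 a b = 0%N -> a = b.
Proof. by case: a; case: b. Qed.
Lemma DD_tri n (x y z : S2n n) : (DD x z <= DD x y + DD y z)%N.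
Proof. rewrite /DD -big_split /=; apply: leq_sum => j _; exact: d1_tri. Qed.
Lemma DD_sym n (x y : S2n n) : DD x y = DD y x.
Proof. by apply: eq_bigr => j _; rewrite d1_sym. Qed.
Lemma DD_xx n (x : S2n n) : DD x x = 0%N.
Proof. by apply: big1 => j _; case: (x j). Qed.

Definition rk (n : nat) (x : S2n n) : nat := \sum_(j < n) (x j != Ze).

Definition upd (n : nat) (x : S2n n) (j : 'I_n) (a : S2) : S2n n :=
  [ffun i => if i == j then a else x i].

Lemma updE n (x : S2n n) j a i : upd x j a i = if i == j then a else x i.
Proof. by rewrite ffunE. Qed.

Lemma neq_ffun n (x y : S2n n) : x != y -> exists i, x i != y i.
Proof.
move=> H; apply/existsP; apply: contraNT H => /existsPn H.
by apply/eqP/ffunP => i; apply/eqP; move: (H i); rewrite negbK.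
Qed.

Lemma le1_rk a b : le1 a b -> ((a != Ze) <= (b != Ze))%N.
Proof. by rewrite /le1 !S2_eqE; case: a; case: b. Qed.

Lemma ltS_rk n (x y : S2n n) : ltS x y -> (rk x < rk y)%N.
Proof.
case/andP => /neq_ffun [i Hi] /forallP Hle.
rewrite /rk (bigD1 i) //= [X in (_ < X)%N](bigD1 i) //=.
have H1 : (\sum_(j < n | j != i) (x j != Ze) <= \sum_(j < n | j != i) (y j != Ze))%N.
  by apply: leq_sum => j _; apply: le1_rk.
move: (Hle i) Hi; rewrite /le1 !S2_eqE; case: (x i); case: (y i) => //= _ _; lia.
Qed.

Lemma rk_upd n (x : S2n n) j a : x j = Ze -> a != Ze -> rk (upd x j a) = (rk x).+1.
Proof.
move=> Hx Ha; rewrite /rk (bigD1 j) //= [in RHS](bigD1 j) //= updE eqxx Hx Ha eqxx add0n add1n.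
congr _.+1; apply: eq_bigr => i Hi; by rewrite updE (negbTE Hi).
Qed.

Lemma covers_upd n (x : S2n n) j a : x j = Ze -> a != Ze -> covers x (upd x j a).
Proof.
move=> Hx Ha; apply/andP; split.
  apply/andP; split.
    apply/eqP => /ffunP /(_ j); rewrite updE eqxx Hx => E.
    by move: Ha; rewrite -E eqxx.
  apply/forallP => i; rewrite updE; case: (i == j) /eqP => [->|_].
    by rewrite Hx /le1 eqxx.
  by rewrite /le1 eqxx orbT.
apply/forallP => z; apply/negP => /andP [/ltS_rk H1 /ltS_rk H2].
by move: H2; rewrite rk_upd //; lia.
Qed.

Lemma covers_DD n (x y : S2n n) : covers x y -> (DD x y <= 1)%N.
Proof.
case/andP => /andP [Hne /forallP Hle] /forallP Hc.
have [i Hi] := neq_ffun Hne.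
have Hoth : forall k, k != i -> x k = y k.
  move=> k Hk; apply/eqP; apply/negP => Hxk.
  move: (Hc (upd x i (y i))); rewrite negb_and => /orP [] /negP; apply.
  - apply/andP; split.
      apply/eqP => /ffunP /(_ i); rewrite updE eqxx => E.
      by move: Hi; rewrite E eqxx.
    apply/forallP => l; rewrite updE; case: (l == i) /eqP => [->|_]; first exact: Hle.
    by rewrite /le1 eqxx orbT.
  - apply/andP; split.
      apply/eqP => /ffunP /(_ k); rewrite updE (negbTE Hk) => E.
      by move: Hxk; rewrite E eqxx.
    apply/forallP => l; rewrite updE; case: (l == i) /eqP => [->|_].
      by rewrite /le1 eqxx orbT.
    exact: Hle.
rewrite /DD (bigD1 i) //= big1 => [|k Hk]; last by rewrite Hoth //; case: (y k).
move: (Hle i) Hi; rewrite /le1 !S2_eqE; by case: (x i); case: (y i).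
Qed.

Lemma adj_DD n (x y : S2n n) : adj x y -> (DD x y <= 1)%N.
Proof. by case/orP => [/covers_DD|/covers_DD]; rewrite // DD_sym. Qed.

Lemma walk_DD n (x y : S2n n) s : walk x y s -> (DD x y <= size s)%N.
Proof.
elim: s x => [|z s IH] x /andP [Hp /eqP Hl].
  by rewrite -Hl DD_xx.
move: Hp Hl => /= /andP [Ha Hp] Hl.
have : walk z y s by rewrite /walk Hp Hl eqxx.
move/IH => H.
have := DD_tri x z y; have := adj_DD Ha; lia.
Qed.

Lemma DD_upd n (x y : S2n n) j : x j != y j ->
  (DD (upd x j (if x j == Ze then y j else Ze)) y).+1 = DD x y.
Proof.
move=> Hj; rewrite /DD (bigD1 j) //= [in RHS](bigD1 j) //= updE eqxx.
have -> : \sum_(i < n | i != j) d1 (upd x j (if x j == Ze then y j else Ze) i) (y i)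
   = \sum_(i < n | i != j) d1 (x i) (y i).
  by apply: eq_bigr => i Hi; rewrite updE (negbTE Hi).
move: Hj; rewrite !S2_eqE; case: (x j); case: (y j) => //= _; lia.
Qed.

Lemma walk_ex n (x y : S2n n) : exists s, walk x y s /\ size s = DD x y.
Proof.
move Hk : (DD x y) => k; elim: k x Hk => [|k IH] x Hk.
  exists [::]; split => //; rewrite /walk /=.
  apply/eqP/ffunP => j; apply: d1_eq0; apply/eqP.
  move: Hk => /eqP; rewrite /DD sum_nat_eq0 => /forallP /(_ j); exact.
have Hne : x != y by apply: contra_eqN Hk => /eqP ->; rewrite DD_xx.
have [j Hj] := neq_ffun Hne.
set x' := upd x j (if x j == Ze then y j else Ze).
have Hk' : DD x' y = k by move: (DD_upd Hj); rewrite Hk => -[].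
have [s [Hw Hs]] := IH x' Hk'.
exists (x' :: s); split; last by rewrite /= Hs.
move: Hw => /andP [Hp Hl]; rewrite /walk /= Hp Hl !andbT.
case: (boolP (x j == Ze)) => Hz.
- apply/orP; left; rewrite /x' Hz; apply: covers_upd; first exact/eqP.
  by move: Hj; rewrite (eqP Hz) eq_sym.
- apply/orP; right.
  have -> : x = upd x' j (x j).
    apply/ffunP => i; rewrite !updE; case: (i == j) /eqP => [->|] //.
  rewrite /x' (negbTE Hz); apply: covers_upd; first by rewrite updE eqxx.
  by [].
Qed.

Definition inI1 (p q u : S2) : bool := (d1 p u + d1 u q == d1 p q)%N.
Definition allI (n : nat) (p q u : S2n n) : bool := [forall j, inI1 (p j) (q j) (u j)].

Lemma sum_eq_le n (f g : 'I_n -> nat) :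
  (forall j, g j <= f j)%N -> (\sum_j f j <= \sum_j g j)%N -> forall j, f j = g j.
Proof.
move=> Hle Hs j.
have H0 : (\sum_j (f j - g j) == 0)%N.
  by rewrite sumnB; [rewrite subn_eq0 | by move=> i _; apply: Hle].
move: H0; rewrite sum_nat_eq0 => /forallP /(_ j) /=; rewrite subn_eq0 => H.
by apply/eqP; rewrite eqn_leq H Hle.
Qed.

Lemma DD_split n (p q u : S2n n) : allI p q u -> (DD p u + DD u q)%N = DD p q.
Proof.
move=> /forallP H; rewrite /DD -big_split /=; apply: eq_bigr => j _; exact/eqP/H.
Qed.

Lemma Iset_allI n (p q u : S2n n) : Iset p q u <-> allI p q u.
Proof.
split.
- move=> [s [Hw Hu Hmin]].
  have [s0 [Hw0 Hs0]] := walk_ex p q.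
  have Hle := Hmin _ Hw0; rewrite Hs0 in Hle.
  case/splitPl: Hu Hw Hle => s1 s2 Hl.
  rewrite /walk cat_path last_cat Hl => /andP [/andP [Hp1 Hp2] Hq] Hle.
  have H1 : walk p u s1 by rewrite /walk Hp1 Hl eqxx.
  have H2 : walk u q s2 by rewrite /walk Hp2 Hq.
  have := walk_DD H1; have := walk_DD H2; rewrite size_cat in Hle => a b.
  have Hsum : (DD p u + DD u q <= DD p q)%N by lia.
  apply/forallP => j; apply/eqP; move: j; apply: sum_eq_le.
    by move=> j; apply: d1_tri.
  by rewrite big_split.
- move=> H.
  have [s1 [Hw1 Hs1]] := walk_ex p u.
  have [s2 [Hw2 Hs2]] := walk_ex u q.
  exists (s1 ++ s2); split.
  + move: Hw1 Hw2 => /andP [Hp1 /eqP Hl1] /andP [Hp2 Hl2].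
    by rewrite /walk cat_path last_cat Hl1 Hp1 Hp2 Hl2.
  + move: Hw1 => /andP [_ /eqP <-].
    by rewrite -cat_cons mem_cat mem_last.
  + move=> s' Hw'; rewrite size_cat Hs1 Hs2 DD_split //; exact: walk_DD.
Qed.

From mathcomp Require Import ring lra.
Local Open Scope ring_scope.

Definition aa (R : realType) (a : R) : R := a / (1 + a).
Definition bb (R : realType) (a : R) : R := (1 + a)^-1.

Lemma Ka1 (R : realType) (a w1 w2 : R) : 0 < a ->
  (aa a * (w1 + w2) <= w2) = (a * w1 <= w2).
Proof.
move=> Ha; have H1 : 0 < (1 + a)^-1 by rewrite invr_gt0; lra.
have E : aa a * (w1 + w2) - w2 = (a * w1 - w2) * (1 + a)^-1.
  rewrite /aa; field; lra.
by rewrite -subr_le0 E pmulr_lle0 // subr_le0.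
Qed.
Lemma Ka2 (R : realType) (a w1 w2 : R) : 0 < a ->
  (w2 <= aa a * (w1 + w2)) = (w2 <= a * w1).
Proof.
move=> Ha; have H1 : 0 < (1 + a)^-1 by rewrite invr_gt0; lra.
have E : w2 - aa a * (w1 + w2) = (w2 - a * w1) * (1 + a)^-1.
  rewrite /aa; field; lra.
by rewrite -subr_le0 E pmulr_lle0 // subr_le0.
Qed.
Lemma Kb1 (R : realType) (a w1 w2 : R) : 0 < a ->
  (w2 <= bb a * (w1 + w2)) = (a * w2 <= w1).
Proof.
move=> Ha; have H1 : 0 < (1 + a)^-1 by rewrite invr_gt0; lra.
have E : w2 - bb a * (w1 + w2) = (a * w2 - w1) * (1 + a)^-1.
  rewrite /bb; field; lra.
by rewrite -subr_le0 E pmulr_lle0 // subr_le0.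
Qed.
Lemma Kb2 (R : realType) (a w1 w2 : R) : 0 < a ->
  (bb a * (w1 + w2) <= w2) = (w1 <= a * w2).
Proof.
move=> Ha; have H1 : 0 < (1 + a)^-1 by rewrite invr_gt0; lra.
have E : bb a * (w1 + w2) - w2 = (w1 - a * w2) * (1 + a)^-1.
  rewrite /bb; field; lra.
by rewrite -subr_le0 E pmulr_lle0 // subr_le0.
Qed.

Definition lo1 (R : realType) (p q x : S2) (A B : R) : R :=
  match p, q, x with
  | Mi, Pl, Pl => A | Mi, Pl, Ze => 1 | Pl, Mi, Mi => B | Pl, Mi, Ze => 1
  | Mi, Ze, Ze => 1 | Pl, Ze, Ze => 1 | _, _, _ => 0 end.
Definition hi1 (R : realType) (p q x : S2) (A B : R) : R :=
  match p, q, x with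
  | Mi, Pl, Mi => A | Mi, Pl, Ze => 0 | Pl, Mi, Pl => B | Pl, Mi, Ze => 0
  | Ze, Mi, Ze => 0 | Ze, Pl, Ze => 0 | _, _, _ => 1 end.

Definition dd1 (R : realType) (alpha : nat -> R) (j : nat) (w : R * R) (p q y : S2) : R :=
  w.1 * (Defs.val1 alpha j (meet1 y p) - Defs.val1 alpha j (meet1 p q)) +
  w.2 * (Defs.val1 alpha j (meet1 y q) - Defs.val1 alpha j (meet1 p q)).

Lemma forallS2 (P : S2 -> Prop) : (forall y, P y) = (P Mi /\ P Ze /\ P Pl).
Proof. by apply: propext; split => [H|[? [? ?]] []]. Qed.
Lemma imp_true (P : Prop) : (true -> P) = P.
Proof. apply: propext; split; [exact: (fun H => H isT) | exact: (fun H _ => H)]. Qed.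
Lemma imp_false (P : Prop) : (false -> P) = True.
Proof. by apply: propext. Qed.

Lemma coordT (R : realType) (alpha : nat -> R) (j : nat) (w : R * R) (p q x : S2) :
  0 < alpha j.+1 -> 0 <= w.1 -> 0 <= w.2 -> inI1 p q x ->
  (forall y, inI1 p q y -> dd1 alpha j w p q y <= dd1 alpha j w p q x) <->
  (lo1 p q x (aa (alpha j.+1)) (bb (alpha j.+1)) * (w.1 + w.2) <= w.2 /\
   w.2 <= hi1 p q x (aa (alpha j.+1)) (bb (alpha j.+1)) * (w.1 + w.2)).
Proof.
case: w => w1 w2 /= Ha H1 H2.
rewrite forallS2 /dd1.
case: p; case: q; case: x => //= _;
rewrite /meet1 !S2_eqE /= ?imp_true ?imp_false ?Ka1 ?Ka2 ?Kb1 ?Kb2 ?mul0r ?mul1r //;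
split => [[h1 [h2 h3]] | [h1 h2]]; (try split); (try split); try done; nra.
Qed.

Definition LL (R : realType) (n : nat) (alpha : nat -> R) (p q x : S2n n) : R :=
  \big[Num.max/0]_(j < n) lo1 (p j) (q j) (x j) (aa (alpha j.+1)) (bb (alpha j.+1)).
Definition UU (R : realType) (n : nat) (alpha : nat -> R) (p q x : S2n n) : R :=
  \big[Num.min/1]_(j < n) hi1 (p j) (q j) (x j) (aa (alpha j.+1)) (bb (alpha j.+1)).
Definition Kc (R : realType) (L U : R) (w : R * R) : Prop :=
  [/\ 0 <= w.1, 0 <= w.2, L * (w.1 + w.2) <= w.2 & w.2 <= U * (w.1 + w.2)].

Lemma bigmax_mul (R : realType) n (f : 'I_n -> R) (s w2 : R) : 0 <= s -> 0 <= w2 ->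
  ((\big[Num.max/0]_j f j) * s <= w2) <-> (forall j, f j * s <= w2).
Proof.
move=> Hs Hw; split.
- move=> H j; apply: le_trans H; apply: ler_wpM2r => //.
  rewrite (bigD1 j) //= le_max lexx //.
- move=> H; apply: (big_ind (fun m => m * s <= w2)) => //.
  + by rewrite mul0r.
  + by move=> x y Hx Hy; rewrite maxEle; case: ifP.
Qed.

Lemma bigmin_mul (R : realType) n (f : 'I_n -> R) (s w2 : R) : 0 <= s -> w2 <= s ->
  (w2 <= (\big[Num.min/1]_j f j) * s) <-> (forall j, w2 <= f j * s).
Proof.
move=> Hs0 Hs; split.
- move=> H j; apply: (le_trans H).
  apply: ler_wpM2r => //; rewrite (bigD1 j) //= ge_min lexx //.
- move=> H; apply: (big_ind (fun m => w2 <= m * s)) => //.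
  + by rewrite mul1r.
  + by move=> x y Hx Hy; rewrite minEle; case: ifP.
Qed.

Lemma dot_vpt (R : realType) n (alpha : nat -> R) (p q u : S2n n) (w : R * R) :
  dotp w (vpt alpha p q u) = \sum_(j < n) dd1 alpha j w (p j) (q j) (u j).
Proof.
rewrite /dotp /vpt /valu /= -!sumrB !mulr_sumr -big_split /=.
by apply: eq_bigr => j _; rewrite !ffunE /dd1.
Qed.

Lemma allI_upd n (p q x : S2n n) j y : allI p q x -> inI1 (p j) (q j) y -> allI p q (upd x j y).
Proof.
move=> /forallP H Hy; apply/forallP => i; rewrite updE.
by case: (i == j) /eqP => [->|_].
Qed.

Lemma support_coord (R : realType) n (alpha : nat -> R) (p q x : S2n n) (w : R * R) :
  allI p q x ->
  (forall u, allI p q u -> dotp w (vpt alpha p q u) <= dotp w (vpt alpha p q x)) <->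
  (forall (j : 'I_n) y, inI1 (p j) (q j) y ->
      dd1 alpha j w (p j) (q j) y <= dd1 alpha j w (p j) (q j) (x j)).
Proof.
move=> Hx; split.
- move=> H j y Hy; move: (H _ (allI_upd Hx Hy)); rewrite !dot_vpt.
  rewrite (bigD1 j) //= [X in _ <= X -> _](bigD1 j) //= updE eqxx.
  have -> : \sum_(i < n | i != j) dd1 alpha i w (p i) (q i) (upd x j y i)
          = \sum_(i < n | i != j) dd1 alpha i w (p i) (q i) (x i).
    by apply: eq_bigr => i Hi; rewrite updE (negbTE Hi).
  by rewrite lerD2r.
- move=> H u /forallP Hu; rewrite !dot_vpt; apply: ler_sum => j _; exact: H.
Qed.

Lemma sum_ind (R : realType) n (x : S2n n) (F : S2n n -> R) :
  \sum_u ((u == x)%:R * F u) = F x.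
Proof.
rewrite (bigD1 x) //= eqxx mul1r big1 ?addr0 // => u /negbTE ->; by rewrite mul0r.
Qed.

Lemma convI_pt (R : realType) n (alpha : nat -> R) (p q x : S2n n) :
  allI p q x -> convI alpha p q (vpt alpha p q x).
Proof.
move=> Hx; exists (fun u => (u == x)%:R); split.
- by move=> u; rewrite ler0n.
- move=> u Hu; case: eqP => // E; case: Hu; rewrite E; exact/Iset_allI.
- by have := sum_ind x (fun _ => (1 : R)); under eq_bigr do rewrite mulr1.
- by rewrite !sum_ind; case: (vpt alpha p q x).
Qed.

Lemma convI_le (R : realType) n (alpha : nat -> R) (p q : S2n n) (w z : R * R) (c : R) :
  (forall u, allI p q u -> dotp w (vpt alpha p q u) <= c) ->
  convI alpha p q z -> dotp w z <= c.
Proof.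
move=> H [lam [h0 hI h1 ->]].
have -> : dotp w (\sum_u lam u * (vpt alpha p q u).1, \sum_u lam u * (vpt alpha p q u).2)
        = \sum_u lam u * dotp w (vpt alpha p q u).
  rewrite /dotp /= !mulr_sumr -big_split /=; apply: eq_bigr => u _; ring.
have -> : c = \sum_u lam u * c by rewrite -mulr_suml h1 mul1r.
apply: ler_sum => u _.
case: (pselect (Iset p q u)) => Hu.
  by apply: ler_wpM2l => //; apply: H; apply/Iset_allI.
by rewrite hI // !mul0r.
Qed.

Lemma Ccone_K (R : realType) n (alpha : nat -> R) (p q x : S2n n) :
  (forall i, (0 < i <= n)%N -> 0 < alpha i) -> allI p q x ->
  Ccone alpha p q x = Kc (LL alpha p q x) (UU alpha p q x).
Proof.
move=> Hpos Hx; apply/funext => w; apply/propext.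
have Ha : forall j : 'I_n, 0 < alpha j.+1 by move=> j; apply: Hpos; rewrite /= ltn_ord.
have HxI := Hx; move/forallP: HxI => HxI.
split.
- case=> h1 h2 hc hm; split => //.
  + have Hs := (support_coord alpha w Hx).1 (fun u Hu => hm _ (convI_pt alpha Hu)).
    apply/bigmax_mul => //; first lra.
    move=> j; exact: ((coordT (w := w) (Ha j) h1 h2 (HxI j)).1 (Hs j)).1.
  + have Hs := (support_coord alpha w Hx).1 (fun u Hu => hm _ (convI_pt alpha Hu)).
    apply/bigmin_mul => //; [lra|lra|].
    move=> j; exact: ((coordT (w := w) (Ha j) h1 h2 (HxI j)).1 (Hs j)).2.
- case=> h1 h2 hL hU; split => //; first exact: convI_pt.
  move=> z; apply: convI_le => u Hu.
  move: u Hu; apply/(support_coord alpha w Hx) => j y Hy.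
  apply: ((coordT (w := w) (Ha j) h1 h2 (HxI j)).2 _) => //; split.
  + move/bigmax_mul: hL => /(_ ltac:(lra) h2); exact.
  + move/bigmin_mul: hU => /(_ ltac:(lra) ltac:(lra)); exact.
Qed.

Definition gg (R : realType) (a : R) : R := sin a / (sin a + cos a).

Lemma sc_pos (R : realType) (a : R) : 0 <= a <= pi / 2 ->
  [/\ 0 <= sin a, 0 <= cos a & 0 < sin a + cos a].
Proof.
move=> /andP [h1 h2]; have hp := pi_gt0 R.
have Hs : 0 <= sin a by apply: sin_ge0_pi; apply/andP; split; lra.
have Hc : 0 <= cos a by apply: cos_ge0_pihalf; apply/andP; split; lra.
have E := cos2Dsin2 a; split => //; nra.
Qed.

Lemma gg01 (R : realType) (a : R) : 0 <= a <= pi / 2 -> 0 <= gg a <= 1.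
Proof.
move=> /sc_pos [h1 h2 h3]; rewrite /gg; apply/andP; split.
  by apply: divr_ge0; lra.
by rewrite ler_pdivrMr // mul1r; lra.
Qed.

Lemma angle_Kc (R : realType) (a b : R) : 0 <= a <= pi / 2 -> 0 <= b <= pi / 2 ->
  angle_cone a b = Kc (gg b) (gg a).
Proof.
move=> /sc_pos [ha1 ha2 ha3] /sc_pos [hb1 hb2 hb3].
apply/funext => -[w1 w2]; apply/propext; rewrite /angle_cone /Kc /=.
have Ea : w2 - gg a * (w1 + w2) = (w2 * cos a - w1 * sin a) / (sin a + cos a).
  rewrite /gg; field; lra.
have Eb : gg b * (w1 + w2) - w2 = (w1 * sin b - w2 * cos b) / (sin b + cos b).
  rewrite /gg; field; lra.
have Pa : (w2 <= gg a * (w1 + w2)) = (w2 * cos a <= w1 * sin a).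
  by rewrite -subr_le0 Ea pmulr_lle0 ?invr_gt0 // subr_le0.
have Pb : (gg b * (w1 + w2) <= w2) = (w1 * sin b <= w2 * cos b).
  by rewrite -subr_le0 Eb pmulr_lle0 ?invr_gt0 // subr_le0.
rewrite Pa Pb; split; case => *; by split.
Qed.

Lemma gg_mono (R : realType) (a b : R) : 0 <= b -> b <= a -> a <= pi / 2 -> gg b <= gg a.
Proof.
move=> h1 h2 h3.
have /sc_pos [ha1 ha2 ha3] : 0 <= a <= pi / 2 by apply/andP; split; lra.
have /sc_pos [hb1 hb2 hb3] : 0 <= b <= pi / 2 by apply/andP; split; lra.
have hp := pi_gt0 R.
have Hs : 0 <= sin (a - b) by apply: sin_ge0_pi; apply/andP; split; lra.
have E : gg a - gg b = sin (a - b) / ((sin a + cos a) * (sin b + cos b)).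
  rewrite sinB /gg; field; lra.
by rewrite -subr_ge0 E; apply: divr_ge0 => //; apply: mulr_ge0; lra.
Qed.

Lemma gg_surj (R : realType) (s : R) : 0 <= s <= 1 -> exists a, 0 <= a <= pi / 2 /\ gg a = s.
Proof.
move=> /andP [h1 h2]; have hp := pi_gt0 R.
have [Hs1|Hs1] := eqVneq s 1.
  exists (pi / 2); split; first by apply/andP; split; lra.
  by rewrite /gg sin_pihalf cos_pihalf addr0 divr1 Hs1.
have Hs : s < 1 by rewrite lt_neqAle Hs1.
set t := s / (1 - s).
have Ht : 0 <= t by apply: divr_ge0; lra.
exists (atan t); split.
  apply/andP; split; last exact/ltW/atan_ltpi2.
  by rewrite -atan0; apply: le_atan.
have Hc : 0 < cos (atan t) by apply: cos_gt0_pihalf; rewrite atan_gtNpi2 atan_ltpi2.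
have Hsin : sin (atan t) = t * cos (atan t).
  have := atanK t; rewrite /tan => E.
  by rewrite -{2}E mulrAC -mulrA mulfV ?mulr1 // gt_eqF.
rewrite /gg Hsin /t; field.
by repeat (apply/andP; split); apply/lt0r_neq0; nra.
Qed.

Lemma Kc_test (R : realType) (L U s : R) : 0 <= s <= 1 ->
  Kc L U (1 - s, s) <-> (L <= s /\ s <= U).
Proof.
move=> /andP [h1 h2]; rewrite /Kc /=.
have -> : 1 - s + s = 1 by ring.
rewrite !mulr1; split; [by case | move=> [? ?]; split => //; lra].
Qed.

Lemma cone_meas_Kc (R : realType) (L U : R) : 0 <= L <= 1 -> 0 <= U <= 1 ->
  cone_meas (Kc L U) = Num.max 0 (U - L).
Proof.
move=> HL HU; rewrite /cone_meas.
have uniq_rep : forall a b, 0 <= b -> b <= a -> a <= pi / 2 ->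
    Kc L U = angle_cone a b -> L <= U /\ gg b = L /\ gg a = U.
  move=> a b hb hba ha E.
  have Ia : 0 <= a <= pi / 2 by apply/andP; split => //; apply: le_trans hba.
  have Ib : 0 <= b <= pi / 2 by apply/andP; split => //; apply: le_trans ha.
  rewrite angle_Kc // in E.
  have Hm := gg_mono hb hba ha.
  have T s : 0 <= s <= 1 -> (L <= s /\ s <= U) <-> (gg b <= s /\ s <= gg a).
    move=> Hs; rewrite -(Kc_test L U Hs) -(Kc_test (gg b) (gg a) Hs) E //.
  have [h1 h2] := (T _ (gg01 Ib)).2 (conj (lexx _) Hm).
  have [h3 h4] := (T _ (gg01 Ia)).2 (conj Hm (lexx _)).
  case: (leP L U) => HLU.
    have [h5 h6] := (T _ HL).1 (conj (lexx _) HLU).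
    have [h7 h8] := (T _ HU).1 (conj HLU (lexx _)).
    split => //; split; apply/eqP; rewrite eq_le; apply/andP; split => //.
  exfalso; have := le_trans h1 h2; rewrite leNgt HLU //.
have hp := pi_gt0 R.
case: (leP L U) => HLU.
- rewrite max_r; last by rewrite subr_ge0.
  have [a [Ia Ea]] := gg_surj HU.
  have [b0 [Ib0 Eb0]] := gg_surj HL.
  have [b [Ib [Eb Hba]]] : exists b, [/\ 0 <= b <= pi / 2, gg b = L & b <= a].
    case: (leP b0 a) => Hb0a; first by exists b0.
    exists a; split => //.
    have := gg_mono (a := b0) (b := a) (proj1 (andP Ia)) (ltW Hb0a) (proj2 (andP Ib0)).
    rewrite Ea Eb0 => H; apply/eqP; rewrite eq_le H HLU //.
  apply: xget_unique.
    exists a, b; split; [by case/andP: Ib | exact: Hba | by case/andP: Ia |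
      by rewrite angle_Kc // Ea Eb | by rewrite -/(gg a) -/(gg b) Ea Eb].
  move=> y [a' [b' [hb hba ha E ->]]].
  by have [_ [<- <-]] := uniq_rep a' b' hb hba ha E.
- rewrite max_l; last by rewrite subr_le0 ltW.
  apply: xgetPN => y [a' [b' [hb hba ha E _]]].
  have [H _] := uniq_rep a' b' hb hba ha E.
  by move: H; rewrite leNgt HLU.
Qed.

Lemma two_dirs (R : realType) (s1 s2 d1 d2 : R) : s1 != s2 ->
  (1 - s1) * d1 + s1 * d2 = 0 -> (1 - s2) * d1 + s2 * d2 = 0 -> d1 = 0 /\ d2 = 0.
Proof.
move=> Hs E1 E2.
have E : (s1 - s2) * (d2 - d1) = 0.
  have -> : (s1 - s2) * (d2 - d1) = ((1 - s1) * d1 + s1 * d2) - ((1 - s2) * d1 + s2 * d2) by ring.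
  by rewrite E1 E2 subrr.
move/eqP: E; rewrite mulf_eq0 subr_eq0 (negbTE Hs) /= subr_eq0 => /eqP Ed.
rewrite Ed in E1 *.
have : d1 = (1 - s1) * d1 + s1 * d1 by ring.
by rewrite E1 => ->.
Qed.

Lemma conv_zero (R : realType) (t A B : R) : 0 < t < 1 -> 0 <= A -> 0 <= B ->
  t * A + (1 - t) * B = 0 -> A = 0 /\ B = 0.
Proof.
move=> /andP [h1 h2] hA hB E.
have HA : 0 <= t * A by apply: mulr_ge0; lra.
have HB : 0 <= (1 - t) * B by apply: mulr_ge0; lra.
have E1 : t * A = 0 by lra.
have E2 : (1 - t) * B = 0 by lra.
move/eqP: E1; rewrite mulf_eq0 => /orP [/eqP ?|/eqP ->]; first lra.
move/eqP: E2; rewrite mulf_eq0 => /orP [/eqP ?|/eqP ->]; first lra.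
by [].
Qed.

Lemma ext_max (R : realType) (K : R * R -> Prop) (z : R * R) (s1 s2 : R) :
  0 < s1 -> s1 < s2 -> s2 < 1 -> K z ->
  (forall v, K v -> dotp (1 - s1, s1) v <= dotp (1 - s1, s1) z) ->
  (forall v, K v -> dotp (1 - s2, s2) v <= dotp (1 - s2, s2) z) ->
  extreme_pt K z /\ cw_maximal K z.
Proof.
case: z => z1 z2 h1 h12 h2 Kz H1 H2.
have Hne : s1 != s2 by rewrite lt_eqF.
split; split => //.
- move=> [a1 a2] [b1 b2] t Ka Kb Ht [E1 E2].
  move: (H1 _ Ka) (H1 _ Kb) (H2 _ Ka) (H2 _ Kb); rewrite /dotp /= => h3 h4 h5 h6.
  have [A1 B1] := conv_zero (A := (1 - s1) * z1 + s1 * z2 - ((1 - s1) * a1 + s1 * a2))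
     (B := (1 - s1) * z1 + s1 * z2 - ((1 - s1) * b1 + s1 * b2)) Ht ltac:(lra) ltac:(lra)
     ltac:(rewrite E1 E2; ring).
  have [A2 B2] := conv_zero (A := (1 - s2) * z1 + s2 * z2 - ((1 - s2) * a1 + s2 * a2))
     (B := (1 - s2) * z1 + s2 * z2 - ((1 - s2) * b1 + s2 * b2)) Ht ltac:(lra) ltac:(lra)
     ltac:(rewrite E1 E2; ring).
  have [Da1 Da2] := two_dirs (d1 := a1 - z1) (d2 := a2 - z2) Hne ltac:(lra) ltac:(lra).
  have [Db1 Db2] := two_dirs (d1 := b1 - z1) (d2 := b2 - z2) Hne ltac:(lra) ltac:(lra).
  congr pair; lra.
- move=> [a1 a2] Ka /= ha1 ha2.
  move: (H1 _ Ka); rewrite /dotp /= => h3.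
  have h4 : 0 <= (1 - s1) * (a1 - z1) by apply: mulr_ge0; lra.
  have h5 : 0 <= s1 * (a2 - z2) by apply: mulr_ge0; lra.
  have e4 : (1 - s1) * (a1 - z1) = 0 by lra.
  have e5 : s1 * (a2 - z2) = 0 by lra.
  move/eqP: e4; rewrite mulf_eq0 => /orP [/eqP ?|/eqP ?]; first (exfalso; lra).
  move/eqP: e5; rewrite mulf_eq0 => /orP [/eqP ?|/eqP ?]; first (exfalso; lra).
  congr pair; lra.
Qed.

Definition predm (fA fB : bool) (p q : S2) : S2 :=
  match p, q with Mi, Pl => if fA then Pl else Mi | Pl, Mi => if fB then Pl else Mi
  | _, _ => sqcup1 p q end.

Lemma sqcupP1_predm p q : sqcupP1 p q = predm true true p q.
Proof. by case: p; case: q; rewrite /sqcupP1 /predm /sqcup1 /le1 ?S2_eqE. Qed.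
Lemma veeL1_predm p q : veeL1 p q = predm false true p q.
Proof. by case: p; case: q; rewrite /veeL1 /predm /sqcup1 /le1 ?S2_eqE. Qed.
Lemma veeR1_predm p q : veeR1 p q = predm true false p q.
Proof. by case: p; case: q; rewrite /veeR1 /predm /sqcup1 /le1 ?S2_eqE. Qed.

Lemma coordP (R : realType) (p q x : S2) (A B l h : R) (fA fB : bool) :
  0 <= l -> l < h -> h <= 1 ->
  (fA -> A <= l) -> (~~ fA -> h <= A) -> (fB -> h <= B) -> (~~ fB -> B <= l) ->
  (x = predm fA fB p q) <-> [/\ inI1 p q x, lo1 p q x A B <= l & h <= hi1 p q x A B].
Proof.
move=> h0 hlh h1 hA1 hA2 hB1 hB2.
case: fA hA1 hA2 => hA1 hA2; [have {}hA := hA1 isT | have {}hA := hA2 isT];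
case: fB hB1 hB2 => hB1 hB2; [have {}hB := hB1 isT | have {}hB := hB2 isT | have {}hB := hB1 isT | have {}hB := hB2 isT];
case: p; case: q; case: x; rewrite /predm /sqcup1 /le1 ?S2_eqE /inI1 /= ;
split => [H | [H1 H2 H3]]; (try discriminate); (try by []); (try (split; [by [] | lra | lra])); exfalso; lra.
Qed.


Lemma mono_nat (R : realType) (e : nat -> R) (m : nat) :
  (forall k, (k < m)%N -> e k <= e k.+1) -> forall i j, (i <= j)%N -> (j <= m)%N -> e i <= e j.
Proof.
move=> H i j Hij; elim: j Hij => [|j IH] Hij Hj.
  by move: Hij; rewrite leqn0 => /eqP ->.
case: (ltngtP i j.+1) Hij => // [Hlt|->] _; last by [].
apply: le_trans (IH _ _) (H _ _) => //; lia.
Qed.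

Lemma telesc (R : realType) (e : nat -> R) (m : nat) (L U : R) :
  (forall k, (k < m)%N -> e k <= e k.+1) ->
  (exists k, (k <= m)%N /\ e k = L) -> (exists k, (k <= m)%N /\ e k = U) ->
  \sum_(0 <= k < m) (e k.+1 - e k) * ((L <= e k) && (e k.+1 <= U))%:R = Num.max 0 (U - L).
Proof.
move=> Hs [kL [HkL EL]] [kU [HkU EU]].
have Hm := mono_nat Hs.
suff H : forall m', (m' <= m)%N ->
  \sum_(0 <= k < m') (e k.+1 - e k) * ((L <= e k) && (e k.+1 <= U))%:R
   = Num.max 0 (Num.min U (e m') - L).
  rewrite H // (_ : Num.min U (e m) = U) //.
  have := Hm kU m HkU (leqnn m); rewrite EU => h.
  by rewrite minEle h.
elim => [|m' IH] Hm'.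
  have := Hm 0%N kL (leq0n _) HkL; rewrite EL => h0.
  rewrite big_geq // max_l // subr_le0 minEle; case: ifP => H //.
  exact: le_trans h0.
rewrite big_nat_recr //= IH; last lia.
have He := Hs m' Hm'.
case: (leP L (e m')) => HL /=; case: (leP (e m'.+1) U) => HU /=.
- rewrite mulr1 (min_r (le_trans He HU)).
  rewrite max_r ?subr_ge0 // max_r; first ring.
  by rewrite subr_ge0 (le_trans HL He).
- rewrite mulr0 addr0.
  have HkUm : (kU <= m')%N.
    rewrite leqNgt; apply/negP => Hk.
    have := Hm m'.+1 kU Hk HkU; rewrite EU => h; move: HU; rewrite ltNge h //.
  have HUm : U <= e m' by have := Hm kU m' HkUm (ltnW Hm'); rewrite EU.
  by rewrite (min_l HUm).
- have HkLm : (m'.+1 <= kL)%N.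
    rewrite ltnNge; apply/negP => Hk.
    have := Hm kL m' Hk (ltnW Hm'); rewrite EL => h; move: HL; rewrite ltNge h //.
  have HLm : e m'.+1 <= L by have := Hm m'.+1 kL HkLm HkL; rewrite EL.
  have h1 : Num.min U (e m') - L <= 0.
    by rewrite subr_le0 ge_min; apply/orP; right; exact: ltW.
  have h2 : e m'.+1 - L <= 0 by rewrite subr_le0.
  by rewrite mulr0 addr0 (max_l h1) (max_l h2).
- have HkLm : (m'.+1 <= kL)%N.
    rewrite ltnNge; apply/negP => Hk.
    have := Hm kL m' Hk (ltnW Hm'); rewrite EL => h; move: HL; rewrite ltNge h //.
  have HLm : e m'.+1 <= L by have := Hm m'.+1 kL HkLm HkL; rewrite EL.
  have h1 : Num.min U (e m') - L <= 0.
    by rewrite subr_le0 ge_min; apply/orP; right; exact: ltW.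
  have h2 : U - L <= 0 by rewrite subr_le0; exact: (le_trans (ltW HU)).
  by rewrite mulr0 addr0 (max_l h1) (max_l h2).
Qed.

Ltac side := repeat (apply/andP; split); apply/lt0r_neq0; nra.

Lemma aa_mono (R : realType) (x y : R) : 0 <= x -> x <= y -> aa x <= aa y.
Proof.
move=> h1 h2; have E : aa y - aa x = (y - x) / ((1 + x) * (1 + y)).
  rewrite /aa; field; side.
rewrite -subr_ge0 E; apply: divr_ge0; nra.
Qed.
Lemma bb_anti (R : realType) (x y : R) : 0 <= x -> x <= y -> bb y <= bb x.
Proof.
move=> h1 h2; have E : bb x - bb y = (y - x) / ((1 + x) * (1 + y)).
  rewrite /bb; field; side.
rewrite -subr_ge0 E; apply: divr_ge0; nra.
Qed.
Lemma aa_half (R : realType) (x : R) : 0 <= x -> x <= 1 -> aa x <= 2^-1.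
Proof.
move=> h1 h2; have E : 2^-1 - aa x = (1 - x) / (2 * (1 + x)).
  rewrite /aa; field; side.
rewrite -subr_ge0 E; apply: divr_ge0; nra.
Qed.
Lemma bb_half (R : realType) (x : R) : 0 <= x -> x <= 1 -> 2^-1 <= bb x.
Proof.
move=> h1 h2; have E : bb x - 2^-1 = (1 - x) / (2 * (1 + x)).
  rewrite /bb; field; side.
rewrite -subr_ge0 E; apply: divr_ge0; nra.
Qed.
Lemma aa_ge0 (R : realType) (x : R) : 0 <= x -> 0 <= aa x.
Proof. move=> h; apply: divr_ge0; lra. Qed.
Lemma bb_le1 (R : realType) (x : R) : 0 <= x -> bb x <= 1.
Proof. move=> h; rewrite /bb invf_le1; lra. Qed.
Lemma aa0 (R : realType) : aa (0 : R) = 0.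
Proof. by rewrite /aa mul0r. Qed.
Lemma bb0 (R : realType) : bb (0 : R) = 1.
Proof. by rewrite /bb addr0 invr1. Qed.
Lemma aa_bb (R : realType) (x : R) : 0 <= x -> aa x = 1 - bb x.
Proof. move=> h; rewrite /aa /bb; field; side. Qed.

Definition good (R : realType) (n : nat) (alpha : nat -> R) : Prop :=
  [/\ (forall i : nat, (0 < i <= n)%N -> 0 < alpha i),
      (forall i j : nat, (0 < i)%N -> (i <= j)%N -> (j <= n)%N -> alpha i <= alpha j) &
      (forall i : nat, (0 < i <= n)%N -> alpha i <= 1)].

Lemma alph_ge0 (R : realType) n (alpha : nat -> R) k : good n alpha -> (k <= n)%N -> 0 <= alph alpha k.
Proof.
case=> h1 _ _ hk; rewrite /alph; case: eqP => // /eqP hk0.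
apply/ltW/h1; lia.
Qed.
Lemma alph_le1 (R : realType) n (alpha : nat -> R) k : good n alpha -> (k <= n)%N -> alph alpha k <= 1.
Proof.
case=> _ _ h3 hk; rewrite /alph; case: eqP => // /eqP hk0.
apply/h3; lia.
Qed.
Lemma alph_mono (R : realType) n (alpha : nat -> R) i j : good n alpha ->
  (i <= j)%N -> (j <= n)%N -> alph alpha i <= alph alpha j.
Proof.
move=> G hij hj; case: (eqVneq i 0%N) => [->|hi0].
  rewrite {1}/alph eqxx; exact: alph_ge0 G hj.
have hj0 : j != 0%N by lia.
case: G => h1 h2 h3; rewrite /alph (negbTE hi0) (negbTE hj0); apply: h2 => //; lia.
Qed.

Definition Ak (R : realType) (alpha : nat -> R) k := aa (alph alpha k).
Definition Bk (R : realType) (alpha : nat -> R) k := bb (alph alpha k).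
Definition ee (R : realType) (n : nat) (alpha : nat -> R) (k : nat) : R :=
  if (k <= n)%N then Ak alpha k else Bk alpha ((n + n).+1 - k).

Lemma Ak_mono (R : realType) n (alpha : nat -> R) i j : good n alpha ->
  (i <= j)%N -> (j <= n)%N -> Ak alpha i <= Ak alpha j.
Proof.
move=> G hij hj; apply: aa_mono; [apply: alph_ge0 G _; lia | exact: alph_mono G hij hj].
Qed.
Lemma Bk_anti (R : realType) n (alpha : nat -> R) i j : good n alpha ->
  (i <= j)%N -> (j <= n)%N -> Bk alpha j <= Bk alpha i.
Proof.
move=> G hij hj; apply: bb_anti; [apply: alph_ge0 G _; lia | exact: alph_mono G hij hj].
Qed.
Lemma Ak_half (R : realType) n (alpha : nat -> R) i : good n alpha -> (i <= n)%N -> Ak alpha i <= 2^-1.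
Proof. by move=> G hi; apply: aa_half; [apply: alph_ge0 G hi | apply: alph_le1 G hi]. Qed.
Lemma Bk_half (R : realType) n (alpha : nat -> R) i : good n alpha -> (i <= n)%N -> 2^-1 <= Bk alpha i.
Proof. by move=> G hi; apply: bb_half; [apply: alph_ge0 G hi | apply: alph_le1 G hi]. Qed.

Lemma ee_sorted (R : realType) n (alpha : nat -> R) k : good n alpha ->
  (k < (n + n).+1)%N -> ee n alpha k <= ee n alpha k.+1.
Proof.
move=> G hk; rewrite /ee.
case: (ltngtP k n) => hkn.
- exact: (Ak_mono G (leqnSn k) hkn).
- apply: Bk_anti G _ _; lia.
- rewrite hkn (_ : ((n + n).+1 - n.+1 = n)%N); last lia.
  apply: le_trans (Ak_half G (leqnn n)) (Bk_half G (leqnn n)).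
Qed.

Lemma ee_01 (R : realType) n (alpha : nat -> R) k : good n alpha ->
  (k <= (n + n).+1)%N -> 0 <= ee n alpha k <= 1.
Proof.
move=> G hk; rewrite /ee; case: leqP => hkn; apply/andP; split.
- apply: aa_ge0; exact: alph_ge0 G hkn.
- apply: le_trans (Ak_half G hkn) _; lra.
- apply: le_trans (Bk_half G _) => //; [lra | lia].
- apply: bb_le1; apply: alph_ge0 G _; lia.
Qed.

Lemma ee_0 (R : realType) n (alpha : nat -> R) : ee n alpha 0 = 0.
Proof. by rewrite /ee leq0n /Ak /alph eqxx aa0. Qed.
Lemma ee_top (R : realType) n (alpha : nat -> R) : ee n alpha (n + n).+1 = 1.
Proof.
rewrite /ee ifN; last lia.
by rewrite subnn /Bk /alph eqxx bb0.
Qed.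
Lemma ee_A (R : realType) n (alpha : nat -> R) (j : nat) : (j < n)%N -> ee n alpha j.+1 = aa (alpha j.+1).
Proof. by move=> hj; rewrite /ee hj /Ak /alph. Qed.
Lemma ee_B (R : realType) n (alpha : nat -> R) (j : nat) : (j < n)%N -> ee n alpha (n + n - j) = bb (alpha j.+1).
Proof.
move=> hj; rewrite /ee ifN; last lia.
by rewrite (_ : ((n + n).+1 - (n + n - j) = j.+1)%N) /Bk /alph //; lia.
Qed.

Lemma lo1_cases (R : realType) p q x (A B : R) :
  lo1 p q x A B = 0 \/ lo1 p q x A B = 1 \/ lo1 p q x A B = A \/ lo1 p q x A B = B.
Proof. by case: p; case: q; case: x; rewrite /lo1; auto. Qed.
Lemma hi1_cases (R : realType) p q x (A B : R) :
  hi1 p q x A B = 0 \/ hi1 p q x A B = 1 \/ hi1 p q x A B = A \/ hi1 p q x A B = B.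
Proof. by case: p; case: q; case: x; rewrite /hi1; auto. Qed.

Lemma val_in (R : realType) n (alpha : nat -> R) (j : 'I_n) (v : R) :
  v = 0 \/ v = 1 \/ v = aa (alpha j.+1) \/ v = bb (alpha j.+1) ->
  exists k, (k <= (n + n).+1)%N /\ ee n alpha k = v.
Proof.
have hj := ltn_ord j.
case=> [->|[->|[->|->]]].
- by exists 0%N; rewrite ee_0.
- by exists (n + n).+1; rewrite ee_top.
- by exists j.+1; rewrite ee_A //; split => //; lia.
- by exists (n + n - j)%N; rewrite ee_B //; split => //; lia.
Qed.

Lemma LL_in (R : realType) n (alpha : nat -> R) (p q x : S2n n) :
  exists k, (k <= (n + n).+1)%N /\ ee n alpha k = LL alpha p q x.
Proof.
rewrite /LL; apply: (big_ind (fun m => exists k, (k <= (n + n).+1)%N /\ ee n alpha k = m)).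
- by exists 0%N; rewrite ee_0.
- move=> a b [ka [h1 h2]] [kb [h3 h4]]; rewrite maxEle; case: ifP => _; [by exists kb | by exists ka].
- move=> j _; apply: val_in; exact: lo1_cases.
Qed.
Lemma UU_in (R : realType) n (alpha : nat -> R) (p q x : S2n n) :
  exists k, (k <= (n + n).+1)%N /\ ee n alpha k = UU alpha p q x.
Proof.
rewrite /UU; apply: (big_ind (fun m => exists k, (k <= (n + n).+1)%N /\ ee n alpha k = m)).
- by exists (n + n).+1; rewrite ee_top.
- move=> a b [ka [h1 h2]] [kb [h3 h4]]; rewrite minEle; case: ifP => _; [by exists ka | by exists kb].
- move=> j _; apply: val_in; exact: hi1_cases.
Qed.

Lemma bigmax_le_iff (R : realType) n (f : 'I_n -> R) (c : R) : 0 <= c ->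
  ((\big[Num.max/0]_j f j) <= c) <-> (forall j, f j <= c).
Proof.
move=> hc; have := bigmax_mul f (s := 1) ler01 hc; rewrite mulr1 => ->.
by split => H j; move: (H j); rewrite mulr1.
Qed.
Lemma le_bigmin_iff (R : realType) n (f : 'I_n -> R) (c : R) : c <= 1 ->
  (c <= (\big[Num.min/1]_j f j)) <-> (forall j, c <= f j).
Proof.
move=> hc; have := bigmin_mul f (s := 1) (w2 := c) ler01 hc; rewrite mulr1 => ->.
by split => H j; move: (H j); rewrite mulr1.
Qed.

Definition MM (n : nat) (p q : S2n n) (k : nat) : S2n n :=
  if (k < n)%N then veeLI k p q else if k == n then sqcupI n p q else veeRI (n + n - k) p q.

Lemma MM_coord (R : realType) n (alpha : nat -> R) (p q : S2n n) k (j : 'I_n) :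
  good n alpha -> (k < (n + n).+1)%N ->
  exists fA fB, [/\ MM p q k j = predm fA fB (p j) (q j),
    (fA -> aa (alpha j.+1) <= ee n alpha k), (~~ fA -> ee n alpha k.+1 <= aa (alpha j.+1)),
    (fB -> ee n alpha k.+1 <= bb (alpha j.+1)) & (~~ fB -> bb (alpha j.+1) <= ee n alpha k)].
Proof.
move=> G hk; have hj := ltn_ord j.
have EA : aa (alpha j.+1) = Ak alpha j.+1 by rewrite /Ak /alph.
have EB : bb (alpha j.+1) = Bk alpha j.+1 by rewrite /Bk /alph.
rewrite EA EB /MM /ee.
case: (ltngtP k n) => hkn.
- exists (j < k)%N, true; rewrite ffunE; split.
  + by case: ifP => _; rewrite ?sqcupP1_predm ?veeL1_predm.
  + by move=> hjk; apply: Ak_mono G _ _; lia.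
  + by move=> hjk; apply: Ak_mono G _ _; lia.
  + move=> _; apply: le_trans (Ak_half G hkn) (Bk_half G _); lia.
  + by [].
- exists true, (j < n + n - k)%N; rewrite ffunE; split.
  + by case: ifP => _; rewrite ?sqcupP1_predm ?veeR1_predm.
  + move=> _; apply: le_trans (Ak_half G hj) (Bk_half G _); lia.
  + by [].
  + move=> hji; apply: Bk_anti G _ _; lia.
  + move=> hji; apply: Bk_anti G _ _; lia.
- rewrite hkn; exists true, true; rewrite ffunE hj; split.
  + by rewrite sqcupP1_predm.
  + by move=> _; apply: Ak_mono G _ _; lia.
  + by [].
  + by move=> _; apply: Bk_anti G _ _; lia.
  + by [].
Qed.

Lemma piece (R : realType) n (alpha : nat -> R) (p q x : S2n n) k :
  good n alpha -> (k < (n + n).+1)%N -> ee n alpha k < ee n alpha k.+1 ->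
  (MM p q k == x) = [&& allI p q x, LL alpha p q x <= ee n alpha k & ee n alpha k.+1 <= UU alpha p q x].
Proof.
move=> G hk hlt.
have /andP [hl0 _] := ee_01 G (ltnW hk).
have /andP [_ hh1] := ee_01 G hk.
have Hj : forall j : 'I_n, (x j = MM p q k j) <->
   [/\ inI1 (p j) (q j) (x j),
       lo1 (p j) (q j) (x j) (aa (alpha j.+1)) (bb (alpha j.+1)) <= ee n alpha k &
       ee n alpha k.+1 <= hi1 (p j) (q j) (x j) (aa (alpha j.+1)) (bb (alpha j.+1))].
  move=> j; have [fA [fB [E h1 h2 h3 h4]]] := MM_coord p q j G hk.
  rewrite E; exact: coordP.
apply/idP/idP.
- move/eqP => E.
  have Hx0 : forall j : 'I_n, x j = MM p q k j by move=> j; rewrite E.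
  have Hx := fun j => (Hj j).1 (Hx0 j).
  apply/and3P; split.
  + by apply/forallP => j; case: (Hx j).
  + by apply/(bigmax_le_iff _ hl0) => j; case: (Hx j).
  + by apply/(le_bigmin_iff _ hh1) => j; case: (Hx j).
- case/and3P => /forallP h1 /(bigmax_le_iff _ hl0) h2 /(le_bigmin_iff _ hh1) h3.
  apply/eqP/ffunP => j; symmetry; apply/(Hj j); split; [exact: h1 | exact: h2 | exact: h3].
Qed.

Lemma rhs_sum (R : realType) n (alpha : nat -> R) (p q x : S2n n) :
  good n alpha ->
  rhs_comb alpha p q x =
  \sum_(0 <= k < (n + n).+1) (ee n alpha k.+1 - ee n alpha k) * (MM p q k == x)%:R.
Proof.
move=> G.
set F := fun k => (ee n alpha k.+1 - ee n alpha k) * (MM p q k == x)%:R.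
have shift : \sum_(n.+1 <= k < (n + n).+1) F k = \sum_(0 <= i < n) F (n + n - i)%N.
  rewrite -{1}(add0n n.+1) big_addn (_ : ((n + n).+1 - n.+1 = n)%N); last lia.
  rewrite big_nat_rev /=; apply: eq_big_nat => i hi; congr F; lia.
rewrite (@big_cat_nat _ _ _ n 0 (n + n).+1) //=; last lia.
rewrite (@big_ltn _ _ _ n (n + n).+1); last lia.
rewrite shift /rhs_comb.
have c_eq : forall i, (i < n)%N ->
   (1 + alph alpha i)^-1 - (1 + alph alpha i.+1)^-1 = Bk alpha i - Bk alpha i.+1.
  by move=> i hi; rewrite /Bk /bb.
rewrite (eq_bigr _ (fun i _ => mulrDr _ _ _)).
rewrite big_split /=.
rewrite -(big_mkord xpredT (fun i => ((1 + alph alpha i)^-1 - (1 + alph alpha i.+1)^-1) * (veeLI i p q == x)%:R)).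
rewrite -(big_mkord xpredT (fun i => ((1 + alph alpha i)^-1 - (1 + alph alpha i.+1)^-1) * (veeRI i p q == x)%:R)).
have -> : \sum_(0 <= i < n) ((1 + alph alpha i)^-1 - (1 + alph alpha i.+1)^-1) * (veeLI i p q == x)%:R
        = \sum_(0 <= k < n) F k.
  apply: eq_big_nat => i /andP [_ hi]; rewrite /F /MM /ee hi (ltnW hi) c_eq //.
  have h1 : 0 <= alph alpha i by apply: alph_ge0 G _; lia.
  have h2 : 0 <= alph alpha i.+1 by apply: alph_ge0 G _; lia.
  congr (_ * _); rewrite /Ak (aa_bb h1) (aa_bb h2) /Bk; ring.
have -> : \sum_(0 <= i < n) ((1 + alph alpha i)^-1 - (1 + alph alpha i.+1)^-1) * (veeRI i p q == x)%:R
        = \sum_(0 <= i < n) F (n + n - i)%N.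
  apply: eq_big_nat => i /andP [_ hi]; rewrite /F /MM /ee c_eq //.
  do 4 (rewrite ifN; last lia).
  rewrite (_ : (n + n - (n + n - i) = i)%N); last lia.
  rewrite (_ : ((n + n).+1 - (n + n - i).+1 = i)%N); last lia.
  by rewrite (_ : ((n + n).+1 - (n + n - i) = i.+1)%N); last lia.
have -> : (1 - alph alpha n) / (1 + alph alpha n) * (sqcupI n p q == x)%:R = F n.
  rewrite /F /MM /ee ltnn eqxx leqnn; (try (rewrite ifN; last lia)).
  rewrite (_ : ((n + n).+1 - n.+1 = n)%N); last lia.
  congr (_ * _); rewrite /Bk /Ak /aa /bb; field.
  apply/lt0r_neq0; have := alph_ge0 G (leqnn n); lra.
rewrite /F; ring.
Qed.

Lemma LL01 (R : realType) n (alpha : nat -> R) (p q x : S2n n) : good n alpha ->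
  0 <= LL alpha p q x <= 1.
Proof. move=> G; have [k [hk <-]] := LL_in alpha p q x; exact: ee_01. Qed.
Lemma UU01 (R : realType) n (alpha : nat -> R) (p q x : S2n n) : good n alpha ->
  0 <= UU alpha p q x <= 1.
Proof. move=> G; have [k [hk <-]] := UU_in alpha p q x; exact: ee_01. Qed.

Lemma Eset_of (R : realType) n (alpha : nat -> R) (p q x : S2n n) : good n alpha ->
  allI p q x -> LL alpha p q x < UU alpha p q x -> Eset alpha p q x.
Proof.
move=> G Hx HLU.
have Hpos : forall i, (0 < i <= n)%N -> 0 < alpha i by case: G.
have /andP [hL0 hL1] := LL01 p q x G.
have /andP [hU0 hU1] := UU01 p q x G.
set L := LL alpha p q x in HLU hL0 hL1 *; set U := UU alpha p q x in HLU hU0 hU1 *.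
have Hc : forall s, L <= s <= U -> forall v, convI alpha p q v ->
    dotp (1 - s, s) v <= dotp (1 - s, s) (vpt alpha p q x).
  move=> s hs v hv.
  have hs01 : 0 <= s <= 1 by case/andP: hs => ? ?; apply/andP; split; lra.
  have : Ccone alpha p q x (1 - s, s).
    rewrite Ccone_K //; apply/(Kc_test _ _ hs01); case/andP: hs; by split.
  by case=> _ _ _; apply.
split; first exact/Iset_allI.
apply: (@ext_max _ _ _ (L + (U - L) / 3) (L + 2 * (U - L) / 3)).
- by lra.
- by lra.
- by lra.
- exact: convI_pt.
- apply: Hc; apply/andP; split; lra.
- apply: Hc; apply/andP; split; lra.
Qed.

Lemma frac_val (R : realType) n (alpha : nat -> R) (p q x : S2n n) : good n alpha ->
  allI p q x -> frac_join alpha p q x = Num.max 0 (UU alpha p q x - LL alpha p q x).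
Proof.
move=> G Hx.
have Hpos : forall i, (0 < i <= n)%N -> 0 < alpha i by case: G.
rewrite /frac_join; case: asboolP => HE.
  by rewrite Ccone_K // cone_meas_Kc //; [exact: LL01 | exact: UU01].
case: (ltP (LL alpha p q x) (UU alpha p q x)) => H.
  by exfalso; apply: HE; exact: Eset_of.
by rewrite max_l // subr_le0.
Qed.

Lemma frac_notI (R : realType) n (alpha : nat -> R) (p q x : S2n n) :
  ~~ allI p q x -> frac_join alpha p q x = 0.
Proof.
move=> Hx; rewrite /frac_join; case: asboolP => // -[HI _].
by move: Hx; rewrite (proj1 (Iset_allI p q x) HI).
Qed.

Unset Implicit Arguments.
Theorem proposition3p15 (R : realType) (n : nat) (alpha : nat -> R)
  (Hpos : forall i : nat, (0 < i <= n)%N -> 0 < alpha i)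
  (Hmono : forall i j : nat, (0 < i)%N -> (i <= j)%N -> (j <= n)%N -> alpha i <= alpha j)
  (Hle1 : forall i : nat, (0 < i <= n)%N -> alpha i <= 1) :
  forall p q : S2n n, frac_join alpha p q = rhs_comb alpha p q.
Proof.
move=> p q; apply/funext => x.
have G : good n alpha by split.
rewrite rhs_sum //.
have Hterm : forall k, (0 <= k < (n + n).+1)%N ->
    (ee n alpha k.+1 - ee n alpha k) * (MM p q k == x)%:R =
    (ee n alpha k.+1 - ee n alpha k) *
      [&& allI p q x, LL alpha p q x <= ee n alpha k & ee n alpha k.+1 <= UU alpha p q x]%:R.
  move=> k /andP [_ hk].
  have hs := ee_sorted G hk.
  case: (ltP (ee n alpha k) (ee n alpha k.+1)) => hlt.
    by rewrite (piece p q x G hk hlt).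
  have -> : ee n alpha k.+1 = ee n alpha k by apply/eqP; rewrite eq_le hs hlt.
  by rewrite subrr !mul0r.
rewrite (eq_big_nat _ _ Hterm).
case: (boolP (allI p q x)) => HI.
- rewrite frac_val //= telesc //.
  + by move=> k hk; apply: ee_sorted G hk.
  + have [k [hk E]] := LL_in alpha p q x; by exists k.
  + have [k [hk E]] := UU_in alpha p q x; by exists k.
- rewrite frac_notI // big1 // => k _.
  by rewrite ?(negbTE HI) /= mulr0.
Qed.
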